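(* Let $I$ be an ideal of a ring $R$. The following are equivalent: (1) $R$ is uniquely weakly $I$-clean; (2) $R/I$ is semi Boolean and idempotents can be lifted uniquely weakly modulo $I$; (3) $R/I$ is semi Boolean, idempotents can be lifted weakly modulo $I$, $R$ is abelian, and $I$ is idempotent free; (4) for each $a\in R$ there exists a central idempotent $e\in R$ such that $a-e\in I$ or $a+e\in I$, and $I$ is idempotent free.
   Context: All rings are associative with identity; $Idem(R)$ is the set of idempotents. $R$ is uniquely weakly $I$-clean if for every $x\in R$ there exists a unique $e\in Idem(R)$ with $x-e\in I$ or $x+e\in I$. A ring $A$ is semi Boolean if for every $x\in A$, $x^2=x$ or $x^2=-x$. Idempotents can be lifted weakly modulo $I$ if for every $x\in R$ with $x^2-x\in I$ there is $e\in Idem(R)$ with $x-e\in I$ or $x+e\in I$; lifted uniquely weakly if such $e$ is moreover unique. An ideal is idempotent free if the only idempotent it contains is $0$. $R$ is abelian if all idempotents are central. *)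

(* Defs.v *)
From HB Require Import structures.
From mathcomp Require Import all_boot all_order all_algebra.
Set Implicit Arguments. Unset Strict Implicit. Unset Printing Implicit Defensive.
Import GRing.Theory.
Local Open Scope ring_scope.

Definition idem {R : pzRingType} (e : R) : Prop := e * e = e.

Definition is_ideal {R : pzRingType} (I : {pred R}) : Prop :=
  [/\ 0 \in I,
      (forall x y, x \in I -> y \in I -> x - y \in I),
      (forall r x, x \in I -> r * x \in I) &
      (forall r x, x \in I -> x * r \in I)].

Definition uniquely_weakly_clean {R : pzRingType} (I : {pred R}) : Prop :=
  forall x : R, exists! e : R, idem e /\ (x - e \in I \/ x + e \in I).

(* R/I is semi Boolean: every coset x+I satisfies (x+I)^2 = x+I or (x+I)^2 = -(x+I),
   i.e. (unfolding the quotient) x^2 - x \in I or x^2 + x \in I. *)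
Definition quot_semi_boolean {R : pzRingType} (I : {pred R}) : Prop :=
  forall x : R, x * x - x \in I \/ x * x + x \in I.

Definition lift_weakly {R : pzRingType} (I : {pred R}) : Prop :=
  forall x : R, x * x - x \in I ->
    exists e : R, idem e /\ (x - e \in I \/ x + e \in I).

Definition lift_uniquely_weakly {R : pzRingType} (I : {pred R}) : Prop :=
  forall x : R, x * x - x \in I ->
    exists! e : R, idem e /\ (x - e \in I \/ x + e \in I).

Definition central {R : pzRingType} (e : R) : Prop := forall r : R, e * r = r * e.
Definition abelian_ring (R : pzRingType) : Prop := forall e : R, idem e -> central e.

Definition idem_free {R : pzRingType} (I : {pred R}) : Prop :=
  forall e : R, e \in I -> idem e -> e = 0.

(* Main.v *)
Require Import Defs.
From HB Require Import structures.
From mathcomp Require Import all_boot all_order all_algebra.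
Import GRing.Theory.
Local Open Scope ring_scope.
Set Implicit Arguments. Unset Strict Implicit.

Lemma memN (R : pzRingType) (I : {pred R}) (hI : is_ideal I) x :
  x \in I -> - x \in I.
Proof. case: hI => h0 hB _ _ hx. by have := hB 0 x h0 hx; rewrite sub0r. Qed.

Lemma memB (R : pzRingType) (I : {pred R}) (hI : is_ideal I) x y :
  x \in I -> y \in I -> x - y \in I.
Proof. by case: hI => _ hB _ _; apply: hB. Qed.

Lemma memD (R : pzRingType) (I : {pred R}) (hI : is_ideal I) x y :
  x \in I -> y \in I -> x + y \in I.
Proof. move=> hx hy. by have := memB hI hx (memN hI hy); rewrite opprK. Qed.

Lemma memMl (R : pzRingType) (I : {pred R}) (hI : is_ideal I) r x :
  x \in I -> r * x \in I.
Proof. by case: hI => _ _ hM _; apply: hM. Qed.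

Lemma memMr (R : pzRingType) (I : {pred R}) (hI : is_ideal I) r x :
  x \in I -> x * r \in I.
Proof. by case: hI => _ _ _ hM; apply: hM. Qed.

Lemma mem0 (R : pzRingType) (I : {pred R}) (hI : is_ideal I) : 0 \in I.
Proof. by case: hI. Qed.

Lemma memE (R : pzRingType) (I : {pred R}) x y : x \in I -> x = y -> y \in I.
Proof. by move=> h <-. Qed.

Lemma idem_l (R : pzRingType) (g : R) : idem g -> (1 - g) * g = 0.
Proof. by move=> h; rewrite mulrBl mul1r h subrr. Qed.

Lemma idem_r (R : pzRingType) (g : R) : idem g -> g * (1 - g) = 0.
Proof. by move=> h; rewrite mulrBr mulr1 h subrr. Qed.

Lemma idemC (R : pzRingType) (g : R) : idem g -> idem (1 - g).
Proof. by move=> h; rewrite /idem mulrBl mul1r idem_r // subr0. Qed.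

Lemma idemM (R : pzRingType) (a b : R) : idem a -> idem b -> b * a = a * b ->
  idem (a * b).
Proof.
move=> ha hb hab; rewrite /idem -mulrA (mulrA b) hab -!mulrA hb mulrA ha //.
Qed.

Lemma sq_mem (R : pzRingType) (I : {pred R}) (hI : is_ideal I) y :
  quot_semi_boolean I -> y * y \in I -> y \in I.
Proof.
move=> hsb hyy; case: (hsb y) => h.
  apply: (memE (memB hI hyy h)); by rewrite opprB addrC subrK.
apply: (memE (memB hI h hyy)); by rewrite addrC addKr.
Qed.

Lemma corner1 (R : pzRingType) (I : {pred R}) (hI : is_ideal I) e r :
  quot_semi_boolean I -> idem e -> e * r * (1 - e) \in I.
Proof.
move=> hsb he; refine (sq_mem hI hsb _).
rewrite -!mulrA (mulrA (1 - e)) idem_l // mul0r mulr0 mulr0; exact: mem0 hI.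
Qed.

Lemma corner2 (R : pzRingType) (I : {pred R}) (hI : is_ideal I) e r :
  quot_semi_boolean I -> idem e -> (1 - e) * r * e \in I.
Proof.
move=> hsb he; refine (sq_mem hI hsb _).
rewrite -!mulrA (mulrA e) idem_r // mul0r mulr0 mulr0; exact: mem0 hI.
Qed.

Lemma idem_c1 (R : pzRingType) (e r : R) : idem e -> idem (e + e * r * (1 - e)).
Proof.
move=> he.
have h1 : e * (e * r * (1 - e)) = e * r * (1 - e) by rewrite !mulrA he.
have h2 : e * r * (1 - e) * e = 0 by rewrite -mulrA idem_l // mulr0.
have h3 : e * r * (1 - e) * (e * r * (1 - e)) = 0 by rewrite !mulrA h2 !mul0r.
move: h1 h2 h3; set a := e * r * (1 - e) => h1 h2 h3.
rewrite /idem mulrDl !mulrDr.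
by rewrite h1 h2 h3 he !addr0.
Qed.

Lemma idem_c2 (R : pzRingType) (e r : R) : idem e -> idem (e + (1 - e) * r * e).
Proof.
move=> he.
have h1 : e * ((1 - e) * r * e) = 0 by rewrite !mulrA idem_r // !mul0r.
have h2 : (1 - e) * r * e * e = (1 - e) * r * e by rewrite -mulrA he.
have h3 : (1 - e) * r * e * ((1 - e) * r * e) = 0.
  by rewrite !mulrA -(mulrA _ e) idem_r // mulr0 !mul0r.
move: h1 h2 h3; set a := (1 - e) * r * e => h1 h2 h3.
rewrite /idem mulrDl !mulrDr.
by rewrite h1 h2 h3 he !addr0.
Qed.

Lemma abelian_of (R : pzRingType) (I : {pred R}) (hI : is_ideal I) :
  quot_semi_boolean I ->
  (forall e f : R, idem e -> idem f -> e - f \in I -> f = e) -> abelian_ring R.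
Proof.
move=> hsb hu e he r.
have a0 : e * r * (1 - e) = 0.
  have := hu e _ he (idem_c1 r he).
  rewrite opprD addrA subrr add0r => /(_ (memN hI (corner1 hI r hsb he))).
  by move=> h; apply: (addrI e); rewrite addr0.
have b0 : (1 - e) * r * e = 0.
  have := hu e _ he (idem_c2 r he).
  rewrite opprD addrA subrr add0r => /(_ (memN hI (corner2 hI r hsb he))).
  by move=> h; apply: (addrI e); rewrite addr0.
move: a0 b0; rewrite mulrBr mulr1 !mulrBl mul1r.
move=> /eqP; rewrite subr_eq0 => /eqP h1 /eqP; rewrite subr_eq0 => /eqP h2.
by rewrite {1}h1 h2.
Qed.

Lemma lemC (R : pzRingType) (I : {pred R}) (hI : is_ideal I) (e g : R) :
  idem_free I -> idem e -> central e -> idem g ->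
  (g - e \in I \/ g + e \in I) -> g = e.
Proof.
move=> hif he hc hg hge.
have i1 : idem (g * (1 - e)).
  apply: idemM hg (idemC he) _; by rewrite mulrBl mulrBr mul1r mulr1 hc.
have i2 : idem (e * (1 - g)).
  apply: idemM he (idemC hg) _; by rewrite mulrBl mulrBr mul1r mulr1 hc.
have m1 : g * (1 - e) \in I.
  case: hge => h.
    apply: (memE (memMl hI g h)); by rewrite !mulrBr mulr1 hg.
  apply: (memE (memMr hI (1 - e) (memMl hI g h))).
  by rewrite -mulrA mulrDl (idem_r he) addr0 mulrA hg.
have m2 : e * (1 - g) \in I.
  case: hge => h.
    apply: (memE (memMl hI e (memN hI h))).
    by rewrite opprB !mulrBr mulr1 he hc.
  apply: (memE (memMl hI (1 - g) h)).
  by rewrite mulrDr (idem_l hg) add0r hc.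
have := hif _ m1 i1; rewrite mulrBr mulr1 => /eqP; rewrite subr_eq0 => /eqP h1.
have := hif _ m2 i2; rewrite mulrBr mulr1 => /eqP; rewrite subr_eq0 => /eqP h2.
by rewrite {1}h1 -hc -h2.
Qed.

Theorem mainTheorem10 (R : pzRingType) (I : {pred R}) (hI : is_ideal I) :
  [<-> uniquely_weakly_clean I;
       quot_semi_boolean I /\ lift_uniquely_weakly I;
       [/\ quot_semi_boolean I, lift_weakly I, abelian_ring R & idem_free I];
       (forall a : R, exists e : R, [/\ idem e, central e & (a - e \in I \/ a + e \in I)])
         /\ idem_free I].
Proof.
have h0 := mem0 hI.
tfae.
- move=> h1; split; last by move=> x _; exact: h1.
  move=> x; have [e [[he hx] _]] := h1 x.
  case: hx => hx.
    left; apply: (memE (memB hI (memD hI (memMl hI x hx) (memMr hI e hx)) hx)).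
    rewrite mulrBr mulrBl he addrA subrK opprB addrA subrK //.
  right; apply: (memE (memD hI (memB hI (memMl hI x hx) (memMr hI e hx)) hx)).
  rewrite mulrDr mulrDl he opprD !addrA addrK (addrAC _ x e) subrK //.
- case=> hsb hlu; split => //.
  + by move=> x hx; have [e [Pe _]] := hlu x hx; exists e.
  + apply: (abelian_of hI hsb) => e f he hf hef.
    have [g [_ U]] := hlu e (memE h0 (esym (etrans (congr1 (fun z => z - e) he) (subrr e)))).
    by rewrite -(U f (conj hf (or_introl hef))) (U e (conj he (or_introl (memE h0 (esym (subrr e)))))).
  + move=> e hei he.
    have h00 : 0 * 0 - 0 \in I by rewrite mulr0 subrr.
    have [g [_ U]] := hlu 0 h00.
    rewrite -(U e (conj he (or_introl (memE (memN hI hei) (esym (sub0r e)))))).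
    by rewrite (U 0 (conj (mulr0 0) (or_introl (memE h0 (esym (subrr 0)))))).
- case=> hsb hlw hab hif; split => // a.
  case: (hsb a) => h.
    have [e [he hx]] := hlw a h; exists e; split => //; exact: hab.
  have h' : (- a) * (- a) - (- a) \in I by rewrite mulrNN opprK.
  have [e [he hx]] := hlw _ h'; exists e; split => //; first exact: hab.
  case: hx => hx.
    right; apply: (memE (memN hI hx)); by rewrite opprB opprK addrC.
  left; apply: (memE (memN hI hx)); by rewrite opprD opprK addrC.
- case=> h4 hif x; have [e [he hc hx]] := h4 x.
  exists e; split; first by split.
  move=> f [hf hxf]; apply/esym; apply: (lemC hI hif he hc hf).
  case: hx => hx; case: hxf => hxf.
  + left; apply: (memE (memB hI hx hxf)).
    by rewrite (addrC x (-e)) addrKA opprK addrC.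
  + right; apply: (memE (memB hI hxf hx)).
    by rewrite (addrC x f) addrKA opprK.
  + right; apply: (memE (memB hI hx hxf)).
    by rewrite (addrC x e) addrKA opprK addrC.
  + left; apply: (memE (memB hI hxf hx)).
    by rewrite (addrC x f) addrKA.
Qed.
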